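(* Let $d\ge1$, let $\mathcal{F}=\{1,\dots,d\}$ be partitioned into sets $\mathcal{D}$ (desirable features) and $\mathcal{U}$ (undesirable features), let $c\in\mathbb{R}^d$ with $c_f>0$ for all $f$, let $\mathbb{C}\in\mathbb{R}^{d\times d}$ be the contribution matrix of a causal graph and $h_0\in\mathbb{R}^d$ a classifier with $\mathbb{C}h_0\ge0$ componentwise, and let $\alpha>0$. Consider the agent's problem $$\min_{e\in\mathbb{R}^d,\ e\ge 0}\ c^\top e\quad\text{s.t.}\quad (\mathbb{C}h_0)^\top e\ge\alpha .$$ If there exists $f^\star\in\mathcal{D}$ such that $$\max_{f\in\mathcal{U}}\frac{(\mathbb{C}h_0)_f}{c_f}<\frac{(\mathbb{C}h_0)_{f^\star}}{c_{f^\star}},$$ then every optimal solution (best response) of this problem is a $\beta$-desirable effort profile for every $\beta\in(0,1]$.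
   Context: A causal graph is a weighted directed acyclic graph on $\mathcal{F}$ with adjacency matrix $A$ ($A_{ij}$ the weight of edge $i\to j$, $0$ if absent); its contribution matrix is $\mathbb{C}=\sum_{k=0}^{d}A^k$. The maximum over an empty set is $-\infty$. For $\beta\in(0,1]$, an effort profile $e\in\mathbb{R}^d$ is $\beta$-desirable if $\|e_{\mathcal{D}}\|_2\ge\beta\|e\|_2$, where $e_{\mathcal{D}}$ is the vector of coordinates of $e$ indexed by $\mathcal{D}$. *)

(* Defs.v *)
From HB Require Import structures.
From mathcomp Require Import all_boot all_order all_algebra.
From mathcomp Require Import reals.
Set Implicit Arguments. Unset Strict Implicit. Unset Printing Implicit Defensive.
Import Order.TTheory GRing.Theory Num.Theory.
Local Open Scope ring_scope.

Section Defs.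
Variable R : realType.

Definition edge_rel (d : nat) (A : 'M[R]_d) : rel 'I_d := fun i j => A i j != 0.

Definition is_causal_graph (d : nat) (A : 'M[R]_d) : Prop :=
  forall i j : 'I_d, edge_rel A i j -> ~~ connect (edge_rel A) j i.

Definition contribution (d : nat) (A : 'M[R]_d) : 'M[R]_d :=
  \sum_(k < d.+1) A ^+ k.

Definition feasible (d : nat) (w : 'cV[R]_d) (alpha : R) (e : 'cV[R]_d) : Prop :=
  (forall f, 0 <= e f 0) /\ \sum_(f < d) w f 0 * e f 0 >= alpha.

Definition cost (d : nat) (c e : 'cV[R]_d) : R := \sum_(f < d) c f 0 * e f 0.

Definition best_response (d : nat) (c w : 'cV[R]_d) (alpha : R) (e : 'cV[R]_d) : Prop :=
  feasible w alpha e /\ forall e', feasible w alpha e' -> cost c e <= cost c e'.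

Definition norm2_on (d : nat) (S : {set 'I_d}) (e : 'cV[R]_d) : R :=
  Num.sqrt (\sum_(f in S) e f 0 ^+ 2).

Definition norm2 (d : nat) (e : 'cV[R]_d) : R := Num.sqrt (\sum_(f < d) e f 0 ^+ 2).

Definition beta_desirable (d : nat) (D : {set 'I_d}) (beta : R) (e : 'cV[R]_d) : Prop :=
  norm2_on D e >= beta * norm2 e.

End Defs.

(* Main.v *)
Require Import Defs.
From HB Require Import structures.
From mathcomp Require Import all_boot all_order all_algebra.
From mathcomp Require Import reals.
Import Order.TTheory GRing.Theory Num.Theory.
Local Open Scope ring_scope.

Lemma sum_ind (R : realType) (d : nat) (F : 'I_d -> R) (s : 'I_d) :
  \sum_(f < d) F f * (f == s)%:R = F s.
Proof.
rewrite (bigD1 s) //= eqxx mulr1 big1 ?addr0 // => f /negbTE ->.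
by rewrite mulr0.
Qed.

Lemma sum_pert (R : realType) (d : nat) (F E : 'I_d -> R) (s g : 'I_d) (t u : R) :
  \sum_(f < d) F f * (E f + t * (f == s)%:R - u * (f == g)%:R)
  = \sum_(f < d) F f * E f + t * F s - u * F g.
Proof.
under eq_bigr => f _ do rewrite mulrDr mulrDr mulrN (mulrCA _ t) (mulrCA _ u).
rewrite big_split big_split /= sumrN.
by rewrite -!mulr_sumr !sum_ind.
Qed.

Theorem theorem1 (R : realType) (d : nat) (D : {set 'I_d})
    (c : 'cV[R]_d) (A : 'M[R]_d) (h0 : 'cV[R]_d) (alpha : R) :
  (1 <= d)%N ->
  (forall f, 0 < c f 0) ->
  is_causal_graph A ->
  (forall f, 0 <= (contribution A *m h0) f 0) ->
  0 < alpha ->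
  (exists2 fs, fs \in D &
     forall f, f \in ~: D ->
       (contribution A *m h0) f 0 / c f 0 < (contribution A *m h0) fs 0 / c fs 0) ->
  forall e : 'cV[R]_d, best_response c (contribution A *m h0) alpha e ->
  forall beta : R, 0 < beta -> beta <= 1 -> beta_desirable D beta e.
Proof.
move=> _ cpos _ wpos _ [s sD Hs] e [[e0 efeas] eopt] beta b0 b1.
set w := contribution A *m h0 in wpos Hs efeas eopt.
have zeroU : forall g, g \in ~: D -> e g 0 = 0.
  move=> g gU; apply/eqP; rewrite eq_le e0 andbT; rewrite leNgt; apply/negP => eg.
  have Hr := Hs g gU.
  have cg := cpos g; have cs := cpos s.
  have wsp : 0 < w s 0.
    have : 0 < w s 0 / c s 0 by apply: le_lt_trans Hr; rewrite divr_ge0 // ltW.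
    by rewrite pmulr_lgt0 // invr_gt0.
  have gs : g != s by apply/eqP => E; move: gU; rewrite in_setC E sD.
  set t := e g 0 * w g 0 / w s 0.
  have t0 : 0 <= t by rewrite /t; apply: mulr_ge0; [apply: mulr_ge0; [apply: ltW|] | rewrite invr_ge0 ltW].
  pose e' : 'cV[R]_d := \col_f (e f 0 + t * (f == s)%:R - e g 0 * (f == g)%:R).
  have fe' : feasible w alpha e'.
    split.
      move=> f; rewrite mxE.
      have [->|fg] := eqVneq f g.
        by rewrite (negbTE gs) mulr0 addr0 mulr1 subrr.
      rewrite mulr0 subr0 addr_ge0 // mulr_ge0 //.
    under eq_bigr => f _ do rewrite [e' f 0]mxE.
    by rewrite (@sum_pert _ _ (fun f => w f 0) (fun f => e f 0)) /t divfK ?gt_eqF // addrK.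
  have := eopt e' fe'.
  rewrite /cost.
  under [X in _ <= X -> _]eq_bigr => f _ do rewrite [e' f 0]mxE.
  rewrite (@sum_pert _ _ (fun f => c f 0) (fun f => e f 0)) /t.
  apply/negP; rewrite -ltNge.
  rewrite -addrA gtrDl subr_lt0 -!mulrA ltr_pM2l //.
  rewrite ltr_pdivrMr // mulrAC ltr_pdivlMr // in Hr.
  by rewrite mulrA mulrAC ltr_pdivrMr // [c g 0 * _]mulrC.
rewrite /beta_desirable.
have -> : norm2_on D e = norm2 e.
  rewrite /norm2_on /norm2 (bigID (mem D) predT) /=.
  rewrite [X in _ = Num.sqrt (_ + X)]big1 ?addr0 // => f fD.
  by rewrite zeroU ?expr0n // in_setC.
apply: ler_piMl => //.
exact: sqrtr_ge0.
Qed.
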